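(* Let $S>0$, $I\ge1$, $J\in\{1,\dots,I\}$, $N_1,\dots,N_I$ positive integers and $\theta_1>\dots>\theta_I>0$. Consider the partial price differentiation problem: maximize $\sum_{i=1}^I n_ip_is_i$ over prices $p^1,\dots,p^J>0$, assignments $a_i^j\in\{0,1\}$ with $\sum_{j=1}^J a_i^j=1$ for each $i$, and $n_i\in\{0,\dots,N_i\}$, subject to $p_i=\sum_{j=1}^J a_i^jp^j$, $s_i=(\theta_i/p_i-1)^+$ for each $i$, and $\sum_{i=1}^I n_is_i\le S$. Call group $i$ effective if $n_is_i>0$, and for each $j$ call the set of effective groups $i$ with $a_i^j=1$ the $j$-th cluster. Then this problem has an optimal solution in which every cluster consists of consecutive integers, i.e. is of the form $\{l,l+1,\dots,m\}$ (or is empty).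
   Context: Group $i$ consists of $N_i$ users each with utility $\theta_i\ln(1+s)$; a user facing unit price $p$ demands $(\theta_i/p-1)^+$, where $(x)^+=\max(x,0)$. The service provider has total resource $S$ and may use at most $J$ distinct unit prices, each group being charged one of them. *)

(* Defs.v *)
From HB Require Import structures.
From mathcomp Require Import all_boot all_order all_algebra.
From mathcomp Require Import reals.
Set Implicit Arguments. Unset Strict Implicit. Unset Printing Implicit Defensive.
Import Order.TTheory GRing.Theory Num.Theory.
Local Open Scope ring_scope.

Definition pospart {R : realType} (x : R) : R := Num.max x 0.

Definition group_price {R : realType} {I J : nat}
  (p : 'I_J -> R) (a : 'I_I -> 'I_J -> nat) (i : 'I_I) : R :=
  \sum_(j < J) (a i j)%:R * p j.

Definition demand {R : realType} {I J : nat} (theta : 'I_I -> R)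
  (p : 'I_J -> R) (a : 'I_I -> 'I_J -> nat) (i : 'I_I) : R :=
  pospart (theta i / group_price p a i - 1).

Definition feasible {R : realType} {I J : nat} (S : R) (N : 'I_I -> nat)
  (theta : 'I_I -> R)
  (p : 'I_J -> R) (a : 'I_I -> 'I_J -> nat) (n : 'I_I -> nat) : Prop :=
  (forall j, 0 < p j)
  /\ (forall i j, (a i j == 0)%N || (a i j == 1)%N)
  /\ (forall i, (\sum_(j < J) a i j)%N = 1%N)
  /\ (forall i, (n i <= N i)%N)
  /\ \sum_(i < I) (n i)%:R * demand theta p a i <= S.

Definition revenue {R : realType} {I J : nat} (theta : 'I_I -> R)
  (p : 'I_J -> R) (a : 'I_I -> 'I_J -> nat) (n : 'I_I -> nat) : R :=
  \sum_(i < I) (n i)%:R * group_price p a i * demand theta p a i.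

Definition in_cluster {R : realType} {I J : nat} (theta : 'I_I -> R)
  (p : 'I_J -> R) (a : 'I_I -> 'I_J -> nat) (n : 'I_I -> nat)
  (j : 'I_J) (i : 'I_I) : Prop :=
  0 < (n i)%:R * demand theta p a i /\ a i j = 1%N.

Definition consecutive {I : nat} (C : 'I_I -> Prop) : Prop :=
  forall l k m : 'I_I, C l -> C m -> (l <= k)%N -> (k <= m)%N -> C k.

(* Main.v *)
Require Import Defs.
From HB Require Import structures.
From mathcomp Require Import all_boot all_order all_algebra.
From mathcomp Require Import reals.
From mathcomp Require Import all_classical all_reals all_analysis.
From mathcomp Require Import ring lra.
Import Order.TTheory GRing.Theory Num.Theory.
Import numFieldNormedType.Exports.
Local Open Scope ring_scope.


Section Core.
Context {R : realType} {I J : nat}.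

Lemma pospart_ge0 (x : R) : 0 <= pospart x.
Proof. by rewrite /pospart le_max lexx orbT. Qed.

Lemma pospart_id (x : R) : 0 <= x -> pospart x = x.
Proof. by move=> h; rewrite /pospart max_l. Qed.

Lemma pospart_0 (x : R) : x <= 0 -> pospart x = 0.
Proof. by move=> h; rewrite /pospart max_r. Qed.

Lemma pospart_ge (x : R) : x <= pospart x.
Proof. by rewrite /pospart le_max lexx. Qed.

Lemma pospart_mul (t r : R) : 0 < r -> r * pospart (t / r - 1) = pospart (t - r).
Proof.
move=> r0; case: (leP r t) => h.
- rewrite !pospart_id ?subr_ge0 //; last by rewrite ler_pdivlMr // mul1r.
  by rewrite mulrBr mulr1 mulrCA divff ?mulr1 // gt_eqF.
- rewrite !pospart_0 ?mulr0 //; first by rewrite subr_le0 ltW.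
  by rewrite subr_le0 ler_pdivrMr // mul1r ltW.
Qed.

Lemma pospart_le (x y : R) : x <= y -> pospart x <= pospart y.
Proof. by move=> h; rewrite /pospart ge_max !le_max h lexx !orbT. Qed.

Lemma hd_mono (t r1 r2 : R) : 0 <= t -> 0 < r1 -> r1 <= r2 ->
  pospart (t / r2 - 1) <= pospart (t / r1 - 1).
Proof.
move=> t0 r10 r12; apply: pospart_le; rewrite lerD2r.
apply: ler_wpM2l => //; rewrite lef_pV2 ?posrE //; exact: lt_le_trans r12.
Qed.


Definition Cs (sg : 'I_I -> 'I_J) (n : 'I_I -> nat) (F : 'I_I -> R) (j : 'I_J) : R :=
  \sum_(i < I | sg i == j) (n i)%:R * F i.
Definition Dc (th : 'I_I -> R) sg n j (r : R) := Cs sg n (fun i => pospart (th i / r - 1)) j.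
Definition Rc (th : 'I_I -> R) sg n j (r : R) := Cs sg n (fun i => pospart (th i - r)) j.
Definition Ac (th : 'I_I -> R) sg n j := Cs sg n th j.
Definition Bc sg n j := Cs sg n (fun _ => (1 : R)) j.

Definition dm (th : 'I_I -> R) (sg : 'I_I -> 'I_J) (n : 'I_I -> nat) (p : 'I_J -> R) : R :=
  \sum_(i < I) (n i)%:R * pospart (th i / p (sg i) - 1).
Definition rv (th : 'I_I -> R) (sg : 'I_I -> 'I_J) (n : 'I_I -> nat) (p : 'I_J -> R) : R :=
  \sum_(i < I) (n i)%:R * pospart (th i - p (sg i)).

Lemma tot_part sg n (G : 'I_J -> 'I_I -> R) :
  \sum_(i < I) (n i)%:R * G (sg i) i = \sum_(j < J) Cs sg n (G j) j.
Proof.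
rewrite (partition_big sg predT) //=; apply: eq_bigr => j _.
by rewrite /Cs; apply: eq_big => // i /eqP ->.
Qed.

Lemma dm_part th sg n p : dm th sg n p = \sum_(j < J) Dc th sg n j (p j).
Proof. exact: (tot_part sg n (fun j i => pospart (th i / p j - 1))). Qed.

Lemma rv_part th sg n p : rv th sg n p = \sum_(j < J) Rc th sg n j (p j).
Proof. exact: (tot_part sg n (fun j i => pospart (th i - p j))). Qed.

Lemma Cs_upd sg n sg' n' (g : 'I_I) F j :
  (forall i, i != g -> sg' i = sg i /\ n' i = n i) ->
  Cs sg' n' F j = Cs sg n F j + (sg' g == j)%:R * (n' g)%:R * F g
                  - (sg g == j)%:R * (n g)%:R * F g.
Proof.
move=> H; rewrite /Cs !(big_mkcond (fun i => _ == j)) /= [LHS](bigD1 g) //= [in RHS](bigD1 g) //=.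
rewrite [X in _ = _ + X + _ - _](eq_bigr (fun i => if sg' i == j then (n' i)%:R * F i else 0)); last first.
  by move=> i ig; case: (H i ig) => -> ->.
by case: (sg' g == j); case: (sg g == j); rewrite /= ?mul1r ?mul0r; ring.
Qed.

Lemma sum_ind (g0 X : 'I_J) (F : 'I_J -> R) :
  \sum_(j | j != X) (g0 == j)%:R * F j = (g0 != X)%:R * F g0.
Proof.
case: (eqVneq g0 X) => [->|gX].
  by rewrite big1 ?mul0r // => j jX; rewrite eq_sym (negbTE jX) mul0r.
rewrite (bigD1 g0) //= eqxx mul1r big1 ?addr0 ?mul1r // => j /andP [_ jg].
by rewrite eq_sym (negbTE jg) mul0r.
Qed.

Definition upd (p : 'I_J -> R) X r := fun j => if j == X then r else p j.
Arguments upd : simpl never.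

Lemma tot_upd sg n sg' n' g (p : 'I_J -> R) X r (G : 'I_I -> R -> R) :
  (forall i, i != g -> sg' i = sg i /\ n' i = n i) -> sg' g = X ->
  \sum_(j < J) Cs sg' n' (fun i => G i (upd p X r j)) j
  = Cs sg' n' (fun i => G i r) X + \sum_(j | j != X) Cs sg n (fun i => G i (p j)) j
    - (sg g != X)%:R * ((n g)%:R * G g (p (sg g))).
Proof.
move=> H hg; rewrite (bigD1 X) //= /upd eqxx -addrA; congr (_ + _).
rewrite (eq_bigr (fun j => Cs sg n (fun i => G i (p j)) j
   - (sg g == j)%:R * ((n g)%:R * G g (p j)))); last first.
  move=> j jX; rewrite (negbTE jX) (Cs_upd sg n sg' n' g) // hg eq_sym (negbTE jX) mul0r mul0r.
  by rewrite addr0 mulrA.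
by rewrite sumrB sum_ind.
Qed.


Lemma dm_upd th sg n sg' n' g p X r :
  (forall i, i != g -> sg' i = sg i /\ n' i = n i) -> sg' g = X ->
  dm th sg' n' (upd p X r) = Dc th sg' n' X r + \sum_(j | j != X) Dc th sg n j (p j)
    - (sg g != X)%:R * ((n g)%:R * pospart (th g / p (sg g) - 1)).
Proof.
move=> H hg; rewrite dm_part.
exact: (tot_upd sg n sg' n' g p X r (fun i x => pospart (th i / x - 1)) H hg).
Qed.

Lemma rv_upd th sg n sg' n' g p X r :
  (forall i, i != g -> sg' i = sg i /\ n' i = n i) -> sg' g = X ->
  rv th sg' n' (upd p X r) = Rc th sg' n' X r + \sum_(j | j != X) Rc th sg n j (p j)
    - (sg g != X)%:R * ((n g)%:R * pospart (th g - p (sg g))).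
Proof.
move=> H hg; rewrite rv_part.
exact: (tot_upd sg n sg' n' g p X r (fun i x => pospart (th i - x)) H hg).
Qed.

Lemma dm_split th sg n p X :
  dm th sg n p = Dc th sg n X (p X) + \sum_(j | j != X) Dc th sg n j (p j).
Proof. by rewrite dm_part (bigD1 X). Qed.

Lemma rv_split th sg n p X :
  rv th sg n p = Rc th sg n X (p X) + \sum_(j | j != X) Rc th sg n j (p j).
Proof. by rewrite rv_part (bigD1 X). Qed.

Lemma Cs_ge0 sg n F j : (forall i, 0 <= F i) -> 0 <= Cs sg n F j.
Proof. by move=> h; apply: sumr_ge0 => i _; apply: mulr_ge0 => //; exact: ler0n. Qed.

Lemma Cs_ge_term sg n F j m : (forall i, 0 <= F i) -> sg m = j ->
  (n m)%:R * F m <= Cs sg n F j.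
Proof.
move=> h hm; rewrite /Cs (bigD1 m) ?hm ?eqxx //= lerDl.
by apply: sumr_ge0 => i _; apply: mulr_ge0 => //; exact: ler0n.
Qed.

Lemma Cs_le sg n F G j : (forall i, F i <= G i) -> Cs sg n F j <= Cs sg n G j.
Proof. by move=> h; apply: ler_sum => i _; apply: ler_wpM2l => //; exact: ler0n. Qed.

Lemma Cs_lin sg n F G j : (forall i, sg i == j -> (0 < n i)%N -> F i = G i) ->
  Cs sg n F j = Cs sg n G j.
Proof.
move=> h; apply: eq_bigr => i hi; case: (posnP (n i)) => [->|ni]; first by rewrite !mul0r.
by rewrite h.
Qed.

Lemma Cs_linexp th sg n j (r : R) :
  Cs sg n (fun i => th i / r - 1) j = Ac th sg n j / r - Bc sg n j.
Proof.
rewrite /Ac /Bc /Cs mulr_suml -sumrB; apply: eq_bigr => i _.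
by rewrite mulrBr mulr1 mulrA.
Qed.

Lemma Dc_lin th sg n j r : 0 < r -> (forall i, sg i == j -> (0 < n i)%N -> r < th i) ->
  Dc th sg n j r = Ac th sg n j / r - Bc sg n j.
Proof.
move=> r0 h; rewrite /Dc (Cs_lin _ _ _ (fun i => th i / r - 1)) ?Cs_linexp //.
move=> i hi ni; apply: pospart_id; rewrite subr_ge0 ler_pdivlMr // mul1r.
exact: ltW (h i hi ni).
Qed.

Lemma Rc_lin th sg n j r : (forall i, sg i == j -> (0 < n i)%N -> r < th i) ->
  Rc th sg n j r = Ac th sg n j - r * Bc sg n j.
Proof.
move=> h; rewrite /Rc (Cs_lin _ _ _ (fun i => th i - r)); last first.
  by move=> i hi ni; apply: pospart_id; rewrite subr_ge0; exact: ltW (h i hi ni).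
rewrite /Ac /Bc /Cs mulr_sumr -sumrB; apply: eq_bigr => i _.
by rewrite mulrBr mulr1 [r * _]mulrC.
Qed.

Lemma Rc_Dc th sg n j r : 0 < r -> Rc th sg n j r = r * Dc th sg n j r.
Proof.
move=> r0; rewrite /Rc /Dc /Cs mulr_sumr; apply: eq_bigr => i _.
by rewrite mulrCA pospart_mul.
Qed.

Lemma Dc_ge_lin th sg n j r : Ac th sg n j / r - Bc sg n j <= Dc th sg n j r.
Proof. by rewrite -Cs_linexp /Dc; apply: Cs_le => i; exact: pospart_ge. Qed.

Lemma Dc_ge0 th sg n j r : 0 <= Dc th sg n j r.
Proof. by apply: Cs_ge0 => i; exact: pospart_ge0. Qed.

Lemma Dc_mono th sg n j r1 r2 : (forall i, 0 <= th i) -> 0 < r1 -> r1 <= r2 ->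
  Dc th sg n j r2 <= Dc th sg n j r1.
Proof. by move=> h r10 r12; apply: Cs_le => i; exact: hd_mono. Qed.

Lemma Dc_zero th sg n j r : 0 < r -> (forall i, th i <= r) -> Dc th sg n j r = 0.
Proof.
move=> r0 h; rewrite /Dc /Cs big1 // => i _; rewrite pospart_0 ?mulr0 //.
by rewrite subr_le0 ler_pdivrMr // mul1r.
Qed.

End Core.


Section Opt.
Context {R : realType} {I J : nat} (S : R) (N : 'I_I -> nat) (th : 'I_I -> R).
Hypothesis thpos : forall i, 0 < th i.
Hypothesis ivtD : forall (sg : 'I_I -> 'I_J) n j (a b t : R), 0 < a -> a <= b ->
   Dc th sg n j b <= t <= Dc th sg n j a -> exists2 r, a <= r <= b & Dc th sg n j r = t.

Definition feas sg n (p : 'I_J -> R) :=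
  (forall j, 0 < p j) /\ (forall i, (n i <= N i)%N) /\ dm th sg n p <= S.
Definition opt sg n p := feas sg n p /\
  forall sg' n' p', feas sg' n' p' -> rv th sg' n' p' <= rv th sg n p.
Definition nz (sg : 'I_I -> 'I_J) (n : 'I_I -> nat) (p : 'I_J -> R) :=
  forall i, (0 < n i)%N -> p (sg i) < th i.

Definition Mtop (x : R) := \sum_(i < I) th i + x.

Lemma th_ge0 i : 0 <= th i. Proof. exact: ltW. Qed.

Lemma th_le_Mtop x i : 0 <= x -> th i <= Mtop x.
Proof.
move=> x0; rewrite /Mtop (bigD1 i) //= -addrA lerDl addr_ge0 //.
by apply: sumr_ge0 => k _; exact: th_ge0.
Qed.

Lemma Mtop_ge x : x <= Mtop x.
Proof. by rewrite /Mtop lerDr; apply: sumr_ge0 => k _; exact: th_ge0. Qed.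

Lemma hd_pos (t x : R) : 0 < x -> x < t -> 0 < pospart (t / x - 1).
Proof.
move=> x0 xt; rewrite pospart_id; last by rewrite subr_ge0 ler_pdivlMr // mul1r ltW.
by rewrite subr_gt0 ltr_pdivlMr // mul1r.
Qed.

Lemma gap_lemma sg n p X m k :
  opt sg n p -> sg m = X -> (0 < n m)%N -> p X < th m -> n k = 0%N -> (0 < N k)%N ->
  p X < th k -> False.
Proof.
move=> [[p0 [nN dS]] op] hm nm pm nk Nk pk.
pose sg' := fun i => if i == k then X else sg i.
pose n' := fun i => if i == k then 1%N else n i.
have Hs : forall i, i != k -> sg' i = sg i /\ n' i = n i.
  by move=> i ik; rewrite /sg' /n' (negbTE ik).
have hg : sg' k = X by rewrite /sg' eqxx.
pose T := Dc th sg n X (p X).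
have pX0 := p0 X.
have DcU : forall r, Dc th sg' n' X r = Dc th sg n X r + pospart (th k / r - 1).
  move=> r; rewrite /Dc (Cs_upd sg n sg' n' k) // hg eqxx /n' eqxx nk.
  by rewrite mulr0 mul0r subr0 mulr1 /= mul1r.
have hk0 : 0 < pospart (th k / p X - 1) by exact: hd_pos.
have [r /andP [r1 r2] hr] : exists2 r, p X <= r <= Mtop (p X) & Dc th sg' n' X r = T.
  apply: ivtD => //; first exact: Mtop_ge.
  rewrite Dc_zero; last 2 first.
  - exact: lt_le_trans (Mtop_ge _).
  - by move=> i; apply: th_le_Mtop; exact: ltW.
  by rewrite Dc_ge0 DcU lerDl ltW.
have r0 : 0 < r by exact: lt_le_trans r1.
have rne : r != p X.
  apply/eqP => rE; move: hr; rewrite rE DcU => /eqP; rewrite -subr_eq0 addrAC subrr add0r.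
  by rewrite gt_eqF.
have T0 : 0 < T.
  apply: lt_le_trans (Cs_ge_term _ _ _ _ m (fun i => pospart_ge0 _) hm).
  by rewrite mulr_gt0 ?ltr0n // hd_pos.
have F : feas sg' n' (upd p X r).
  split; first by move=> j; rewrite /upd; case: ifP.
  split; first by move=> i; rewrite /n'; case: ifP => [/eqP -> //|_]; apply: nN.
  rewrite (dm_upd th sg n sg' n' k) // nk mul0r mulr0 subr0 hr.
  by rewrite -dm_split.
have := op _ _ _ F; rewrite (rv_upd th sg n sg' n' k) // nk mul0r mulr0 subr0.
rewrite Rc_Dc // hr (rv_split th sg n p X) Rc_Dc // -/T lerD2r.
rewrite ler_pM2r // => h.
by move: rne; rewrite eq_le h r1.
Qed.


Lemma alg_move (a b nu t x y r T : R) : 0 <= b -> 0 < nu -> 0 < x -> 0 < y ->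
  0 < r -> T = a / x - b + nu * (t / y - 1) -> 0 <= T ->
  (a + nu * t) / r - (b + nu) <= T -> 0 < (y - x) * (y * a - x * b * t) ->
  0 < r * T - (a - x * b) - nu * (t - y).
Proof.
move=> b0 nu0 x0 y0 r0 TE T0 H C.
pose Den := a / x + nu * t / y.
have TE' : T = Den - b - nu by rewrite TE /Den; field; rewrite ?gt_eqF.
have Den0 : 0 < Den.
  have -> : Den = T + b + nu by rewrite TE'; ring.
  by rewrite -addrA ltr_wpDl // ltr_wpDl.
have k1 : (x * b + nu * y) * Den - (a + nu * t) * (b + nu) =
          nu * ((y - x) * (y * a - x * b * t)) / (x * y).
  by rewrite /Den; field; rewrite ?gt_eqF.
have k2 : 0 < (x * b + nu * y) * Den - (a + nu * t) * (b + nu).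
  by rewrite k1; apply: divr_gt0; apply: mulr_gt0.
have rge : a + nu * t <= r * Den.
  have : (a + nu * t) / r <= Den.
    by move: H; rewrite TE'; lra.
  move=> h; have := h; rewrite ler_pdivrMr // => h'; by rewrite [r * _]mulrC.
have e : Den * (r * T - (a - x * b) - nu * (t - y)) =
   (r * Den - (a + nu * t)) * T + ((x * b + nu * y) * Den - (a + nu * t) * (b + nu)).
  by rewrite TE'; ring.
have : 0 < Den * (r * T - (a - x * b) - nu * (t - y)).
  rewrite e; apply: ltr_wpDl k2; apply: mulr_ge0 => //; by rewrite subr_ge0.
by rewrite pmulr_rgt0.
Qed.

Lemma move_lemma sg n p X Y g :
  opt sg n p -> nz sg n p -> sg g = Y -> X != Y -> (0 < n g)%N ->
  (p Y - p X) * (p Y * Ac th sg n X - p X * Bc sg n X * th g) <= 0.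
Proof.
move=> [[p0 [nN dS]] op] hnz hg XY ng.
rewrite leNgt; apply/negP => C.
pose sg' := fun i => if i == g then X else sg i.
have Hs : forall i, i != g -> sg' i = sg i /\ n i = n i.
  by move=> i ig; rewrite /sg' (negbTE ig).
have hg' : sg' g = X by rewrite /sg' eqxx.
have x0 := p0 X; have y0 := p0 Y.
have gY : p Y < th g by rewrite -hg; exact: hnz.
have nzX : forall i, sg i == X -> (0 < n i)%N -> p X < th i.
  by move=> i /eqP <- ni; exact: hnz.
have YX : (Y == X) = false by apply/negbTE; rewrite eq_sym.
pose dg := pospart (th g / p Y - 1).
have dgE : dg = th g / p Y - 1.
  by rewrite /dg pospart_id // subr_ge0 ler_pdivlMr // mul1r ltW.
pose T := Dc th sg n X (p X) + (n g)%:R * dg.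
have DcU : forall r, Dc th sg' n X r = Dc th sg n X r + (n g)%:R * pospart (th g / r - 1).
  move=> r; rewrite /Dc (Cs_upd sg n sg' n g) // hg' eqxx hg YX.
  by rewrite mul0r mul0r subr0 mul1r.
pose lo := Num.min (p X) (p Y).
have lo0 : 0 < lo by rewrite lt_min x0 y0.
have [r /andP [r1 r2] hr] : exists2 r, lo <= r <= Mtop lo & Dc th sg' n X r = T.
  apply: ivtD => //; first exact: Mtop_ge.
  rewrite Dc_zero; last 2 first.
  - exact: lt_le_trans (Mtop_ge _).
  - by move=> i; apply: th_le_Mtop; exact: ltW.
  rewrite addr_ge0 ?Dc_ge0 ?mulr_ge0 ?ler0n ?pospart_ge0 //= DcU.
  apply: lerD.
    by apply: Dc_mono => //; [exact: th_ge0| rewrite ge_min lexx].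
  apply: ler_wpM2l; first exact: ler0n.
  by apply: hd_mono => //; [exact: th_ge0| rewrite ge_min lexx orbT].
have r0 : 0 < r by exact: lt_le_trans r1.
have F : feas sg' n (upd p X r).
  split; first by move=> j; rewrite /upd; case: ifP.
  split; first by [].
  rewrite (dm_upd th sg n sg' n g) // hr hg eq_sym XY mul1r /T -/dg.
  by rewrite addrAC addrK -dm_split.
have := op _ _ _ F; rewrite (rv_upd th sg n sg' n g) // Rc_Dc // hr hg eq_sym XY mul1r.
rewrite (rv_split th sg n p X) addrAC lerD2r (Rc_lin _ _ _ _ _ nzX).
rewrite (pospart_id (th g - p Y)); last by rewrite subr_ge0 ltW.
apply/negP; rewrite -ltNge -subr_gt0.
have b0 : 0 <= Bc sg n X :> R by rewrite /Bc; apply: Cs_ge0 => i; exact: ler01.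
have nu0 : 0 < (n g)%:R :> R by rewrite ltr0n.
have TE : T = Ac th sg n X / p X - Bc sg n X + (n g)%:R * (th g / p Y - 1).
  by rewrite /T Dc_lin // dgE.
have T0 : 0 <= T by rewrite -hr Dc_ge0.
have H : (Ac th sg n X + (n g)%:R * th g) / r - (Bc sg n X + (n g)%:R) <= T.
  rewrite -hr DcU.
  have h1 := Dc_ge_lin th sg n X r.
  have h2 : (n g)%:R * (th g / r - 1) <= (n g)%:R * pospart (th g / r - 1).
    by apply: ler_wpM2l; [exact: ltW|exact: pospart_ge].
  have -> : (Ac th sg n X + (n g)%:R * th g) / r - (Bc sg n X + (n g)%:R) =
     (Ac th sg n X / r - Bc sg n X) + (n g)%:R * (th g / r - 1).
    by rewrite mulrDl mulrBr mulr1 mulrA; ring.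
  exact: lerD.
have := alg_move (Ac th sg n X) (Bc sg n X) ((n g)%:R) (th g) (p X) (p Y) r T b0 nu0 x0 y0 r0 TE T0 H C.
by rewrite addrAC.
Qed.


Lemma exists_small (P : pred 'I_I) (f : 'I_I -> R) :
  (forall i, P i -> 0 < f i) -> exists2 d : R, 0 < d & forall i, P i -> d <= f i.
Proof.
move=> H; exists (\big[Order.min/1]_(i | P i) f i).
- elim/big_ind: _ => //.
  by move=> u v u0 v0; rewrite lt_min u0 v0.
- by move=> i Pi; apply: bigmin_le_cond.
Qed.

Lemma sum2 (F : 'I_J -> R) X Y : X != Y ->
  \sum_(j < J) F j = F X + F Y + \sum_(j | (j != X) && (j != Y)) F j.
Proof.
move=> XY; rewrite (bigD1 X) //= (bigD1 Y) /=; last by rewrite eq_sym.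
by rewrite addrA.
Qed.

Lemma Ac_pos (sg : 'I_I -> 'I_J) n X m : sg m = X -> (0 < n m)%N -> 0 < Ac th sg n X.
Proof.
move=> hm nm; rewrite /Ac.
apply: lt_le_trans (Cs_ge_term sg n th X m (fun i => th_ge0 i) hm).
by rewrite mulr_gt0 ?ltr0n.
Qed.

Lemma Bc_pos (sg : 'I_I -> 'I_J) n X m : sg m = X -> (0 < n m)%N -> 0 < Bc sg n X :> R.
Proof.
move=> hm nm; rewrite /Bc.
have h := Cs_ge_term sg n (fun _ => (1 : R)) X m (fun i => @ler01 R) hm.
apply: lt_le_trans h; by rewrite mulr1 ltr0n.
Qed.

Lemma lam_half sg n p X Y mX mY :
  opt sg n p -> nz sg n p -> X != Y -> sg mX = X -> (0 < n mX)%N ->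
  sg mY = Y -> (0 < n mY)%N ->
  (Ac th sg n Y / p Y) * (p X * Bc sg n X) < (Ac th sg n X / p X) * (p Y * Bc sg n Y) ->
  False.
Proof.
move=> [[p0 [nN dS]] op] hnz XY hmX nmX hmY nmY C.
have x0 := p0 X; have y0 := p0 Y.
have AX := Ac_pos _ _ _ _ hmX nmX; have AY := Ac_pos _ _ _ _ hmY nmY.
have BX := Bc_pos _ _ _ _ hmX nmX; have BY := Bc_pos _ _ _ _ hmY nmY.
set a1 := Ac th sg n X / p X in C *; set a2 := Ac th sg n Y / p Y in C *.
set b1 := p X * Bc sg n X in C *; set b2 := p Y * Bc sg n Y in C *.
have a10 : 0 < a1 by rewrite divr_gt0.
have a20 : 0 < a2 by rewrite divr_gt0.
have b10 : 0 < b1 by rewrite mulr_gt0.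
have b20 : 0 < b2 by rewrite mulr_gt0.
have hpos : forall i, (sg i == X) && (0 < n i)%N -> 0 < th i / p X - 1.
  move=> i /andP [/eqP hi ni]; rewrite subr_gt0 ltr_pdivlMr // mul1r -hi; exact: hnz.
have [d d0 hd] := exists_small (fun i => (sg i == X) && (0 < n i)%N) _ hpos.
pose c := (a1 * b2 - a2 * b1) / (b1 * (a1 + a2)).
have c0 : 0 < c by rewrite divr_gt0 ?subr_gt0 // mulr_gt0 // addr_gt0.
pose h := Num.min (d / 2) (c / 2).
have h0 : 0 < h by rewrite /h lt_min; apply/andP; split; apply: divr_gt0.
have hd' : h < d.
  by rewrite /h gt_min; apply/orP; left; rewrite ltr_pdivrMr ?ltr0n // ltr_pMr // ltr1n.
have hc : h < c.
  by rewrite /h gt_min; apply/orP; right; rewrite ltr_pdivrMr ?ltr0n // ltr_pMr // ltr1n.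
pose D := a2 * (1 + h) + a1 * h.
have D0 : 0 < D by rewrite /D; apply: addr_gt0; apply: mulr_gt0 => //; apply: addr_gt0.
pose al := 1 + h.
pose be := a2 * (1 + h) / D.
have be0 : 0 < be by rewrite /be; apply: divr_gt0 => //; apply: mulr_gt0 => //; apply: addr_gt0.
have be1 : be < 1 by rewrite ltr_pdivrMr // mul1r ltrDl mulr_gt0.
pose p' := upd (upd p X (al * p X)) Y (be * p Y).
have p'X : p' X = al * p X by rewrite /p' /upd (negbTE XY) eqxx.
have p'Y : p' Y = be * p Y by rewrite /p' /upd eqxx.
have p'o : forall j, (j != X) && (j != Y) -> p' j = p j.
  by move=> j /andP [jX jY]; rewrite /p' /upd (negbTE jX) (negbTE jY).
have nzX : forall i, sg i == X -> (0 < n i)%N -> al * p X < th i.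
  move=> i hi ni; have := hd i; rewrite hi ni => /(_ isT).
  rewrite lerBrDr ler_pdivlMr // => hh; apply: lt_le_trans hh.
  by rewrite ltr_pM2r // /al [1 + h]addrC ltrD2r.
have nzY : forall i, sg i == Y -> (0 < n i)%N -> be * p Y < th i.
  move=> i /eqP hi ni; apply: lt_trans (hnz i ni); rewrite hi.
  by rewrite gtr_pMl.
have nzX0 : forall i, sg i == X -> (0 < n i)%N -> p X < th i.
  by move=> i /eqP <- ni; exact: hnz.
have nzY0 : forall i, sg i == Y -> (0 < n i)%N -> p Y < th i.
  by move=> i /eqP <- ni; exact: hnz.
have al0 : 0 < al by rewrite /al; apply: addr_gt0.
have pX' : 0 < al * p X by apply: mulr_gt0.
have pY' : 0 < be * p Y by apply: mulr_gt0.
have F : feas sg n p'.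
  split.
    move=> j; rewrite /p' /upd; case: ifP => _; first by rewrite mulr_gt0.
    by case: ifP => _ //; rewrite mulr_gt0.
  split => //.
  rewrite dm_part (sum2 _ _ _ XY) p'X p'Y.
  rewrite (eq_bigr (fun j => Dc th sg n j (p j))); last by move=> j /p'o ->.
  rewrite (Dc_lin _ _ _ _ _ pX' nzX) (Dc_lin _ _ _ _ _ pY' nzY).
  move: dS; rewrite dm_part (sum2 _ _ _ XY) (Dc_lin _ _ _ _ _ x0 nzX0) (Dc_lin _ _ _ _ _ y0 nzY0).
  suff -> : Ac th sg n X / (al * p X) - Bc sg n X + (Ac th sg n Y / (be * p Y) - Bc sg n Y) =
            Ac th sg n X / p X - Bc sg n X + (Ac th sg n Y / p Y - Bc sg n Y) by [].
  rewrite /be /al /D /a1 /a2; field.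
  have E0 : 0 < Ac th sg n Y * (1 + h) * p X + Ac th sg n X * h * p Y.
    apply: addr_gt0; apply: mulr_gt0 => //; apply: mulr_gt0 => //; exact: addr_gt0.
  by rewrite !gt_eqF // addr_gt0.
have := op _ _ _ F; rewrite !rv_part !(sum2 _ _ _ XY) p'X p'Y.
rewrite (eq_bigr (fun j => Rc th sg n j (p j))); last by move=> j /p'o ->.
rewrite (Rc_lin _ _ _ _ _ nzX) (Rc_lin _ _ _ _ _ nzY) (Rc_lin _ _ _ _ _ nzX0) (Rc_lin _ _ _ _ _ nzY0).
rewrite lerD2r; apply/negP; rewrite -ltNge.
have gain : al * p X * Bc sg n X + be * p Y * Bc sg n Y < p X * Bc sg n X + p Y * Bc sg n Y.
  rewrite -subr_gt0.
  have -> : p X * Bc sg n X + p Y * Bc sg n Y - (al * p X * Bc sg n X + be * p Y * Bc sg n Y)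
     = h * (b2 * a1 - b1 * D) / D.
    rewrite /be /al /b1 /b2 /D; field; by rewrite gt_eqF.
  rewrite divr_gt0 // mulr_gt0 // subr_gt0 /D.
  have := hc; rewrite /c ltr_pdivlMr ?mulr_gt0 ?addr_gt0 // => hh.
  by rewrite -subr_gt0; move: hh; rewrite -subr_gt0; congr (0 < _); ring.
by move: gain; lra.
Qed.


Lemma lambda_lemma sg n p X Y mX mY :
  opt sg n p -> nz sg n p -> X != Y -> sg mX = X -> (0 < n mX)%N ->
  sg mY = Y -> (0 < n mY)%N ->
  Ac th sg n X * p Y ^+ 2 * Bc sg n Y = Ac th sg n Y * p X ^+ 2 * Bc sg n X.
Proof.
move=> o z XY hX nX hY nY.
have h1 := lam_half _ _ _ _ _ _ _ o z XY hX nX hY nY.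
have YX : Y != X by rewrite eq_sym.
have h2 := lam_half _ _ _ _ _ _ _ o z YX hY nY hX nX.
have [[p0 _] _] := o.
have x0 := p0 X; have y0 := p0 Y.
have e : Ac th sg n Y / p Y * (p X * Bc sg n X) = Ac th sg n X / p X * (p Y * Bc sg n Y).
  apply/eqP; rewrite eq_le !leNgt; apply/andP; split; apply/negP; [exact: h2|exact: h1].
have -> : Ac th sg n X * p Y ^+ 2 * Bc sg n Y =
   (Ac th sg n X / p X * (p Y * Bc sg n Y)) * (p X * p Y) by field; rewrite gt_eqF.
have -> : Ac th sg n Y * p X ^+ 2 * Bc sg n X =
   (Ac th sg n Y / p Y * (p X * Bc sg n X)) * (p X * p Y) by field; rewrite gt_eqF.
by rewrite e.
Qed.

Lemma alg_final (x y AX BX AY BY tl tk tm : R) : 0 < x -> 0 < y -> 0 < BX -> 0 < BY ->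
  x != y -> AX * y ^+ 2 * BY = AY * x ^+ 2 * BX -> tk < tl -> tm < tk ->
  (y - x) * (y * AX - x * BX * tk) <= 0 -> (x - y) * (x * AY - y * BY * tl) <= 0 ->
  (x - y) * (x * AY - y * BY * tm) <= 0 -> False.
Proof.
move=> x0 y0 BX0 BY0 xy lam kl mk h1 h2 h3.
have K0 : 0 < x * BX * (y * BY) by rewrite !mulr_gt0.
have e1 : x * BX * (x * AY) = y * BY * (y * AX).
  apply/eqP; rewrite -subr_eq0.
  have -> : x * BX * (x * AY) - y * BY * (y * AX) = AY * x ^+ 2 * BX - AX * y ^+ 2 * BY by ring.
  by rewrite lam subrr.
case: (ltgtP x y) xy => // [xy|yx] _.
- move: h1; rewrite pmulr_rle0 ?subr_gt0 // subr_le0 => h1.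
  move: h2; rewrite nmulr_rle0 ?subr_lt0 // subr_ge0 => h2.
  have a1 : y * BY * (y * AX) <= y * BY * (x * BX * tk) by rewrite ler_pM2l ?mulr_gt0.
  have a2 : x * BX * (y * BY * tl) <= x * BX * (x * AY) by rewrite ler_pM2l ?mulr_gt0.
  have : x * BX * (y * BY) * tl <= x * BX * (y * BY) * tk.
    have -> : x * BX * (y * BY) * tl = x * BX * (y * BY * tl) by ring.
    have -> : x * BX * (y * BY) * tk = y * BY * (x * BX * tk) by ring.
    by apply: le_trans a2 _; rewrite e1.
  by rewrite ler_pM2l // leNgt kl.
- move: h1; rewrite nmulr_rle0 ?subr_lt0 // subr_ge0 => h1.
  move: h3; rewrite pmulr_rle0 ?subr_gt0 // subr_le0 => h3.
  have a1 : y * BY * (x * BX * tk) <= y * BY * (y * AX) by rewrite ler_pM2l ?mulr_gt0.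
  have a3 : x * BX * (x * AY) <= x * BX * (y * BY * tm) by rewrite ler_pM2l ?mulr_gt0.
  have : x * BX * (y * BY) * tk <= x * BX * (y * BY) * tm.
    have -> : x * BX * (y * BY) * tm = x * BX * (y * BY * tm) by ring.
    have -> : x * BX * (y * BY) * tk = y * BY * (x * BX * tk) by ring.
    by apply: le_trans a1 _; rewrite -e1.
  by rewrite ler_pM2l // leNgt mk.
Qed.

Lemma consec_main sg n p :
  opt sg n p -> nz sg n p -> (forall i k, p (sg i) = p (sg k) -> sg i = sg k) ->
  (forall i, (0 < N i)%N) -> (forall i k : 'I_I, (i < k)%N -> th k < th i) ->
  forall (j : 'I_J) (l k m : 'I_I), (0 < n l)%N -> sg l = j -> (0 < n m)%N -> sg m = j ->
  (l <= k)%N -> (k <= m)%N -> (0 < n k)%N /\ sg k = j.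
Proof.
move=> o z mg Npos thdec j l k m nl hl nm hm lk km.
case: (eqVneq k l) => [->|kl]; first by [].
case: (eqVneq k m) => [->|km']; first by [].
have lk' : (l < k)%N by rewrite ltn_neqAle eq_sym kl lk.
have km2 : (k < m)%N by rewrite ltn_neqAle km' km.
have tkl := thdec _ _ lk'; have tmk := thdec _ _ km2.
have pm : p j < th m by rewrite -hm; exact: z.
have nk : (0 < n k)%N.
  rewrite lt0n; apply/negP => /eqP nk0.
  exact: (gap_lemma _ _ _ _ _ _ o hm nm pm nk0 (Npos k) (lt_trans pm tmk)).
split => //.
case: (eqVneq (sg k) j) => // hk.
set Y := sg k in hk.
have jY : j != Y by rewrite eq_sym.
have pjY : p j != p Y.
  apply/eqP => e; move: hk; rewrite /Y -hl (mg k l) ?eqxx //.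
  by rewrite hl.
have [[p0 _] _] := o.
have lam := lambda_lemma _ _ _ _ _ _ _ o z jY hl nl (erefl Y) nk.
have mv1 := move_lemma _ _ _ _ _ _ o z (erefl Y) jY nk.
have mv2 := move_lemma _ _ _ _ _ _ o z hl hk nl.
have mv3 := move_lemma _ _ _ _ _ _ o z hm hk nm.
have BX := Bc_pos _ _ _ _ hl nl; have BY := Bc_pos _ _ _ _ (erefl Y) nk.
exfalso; exact: (alg_final _ _ _ _ _ _ _ _ _ (p0 j) (p0 Y) BX BY pjY lam tkl tmk mv1 mv2 mv3).
Qed.

End Opt.


Section Ana.
Context {R : realType} {I J : nat}.

Lemma cont_sum {T : topologicalType} (s : seq 'I_I) (P : pred 'I_I) (F : 'I_I -> T -> R) (x : T) :
  (forall i, {for x, continuous (F i)}) ->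
  {for x, continuous (fun t => \sum_(i <- s | P i) F i t)}.
Proof.
move=> H; elim: s => [|i s IH].
  have -> : (fun t => \sum_(i <- [::] | P i) F i t) = (fun=> 0).
    by apply/boolp.funext => t; rewrite big_nil.
  exact: cvg_cst.
have -> : (fun t => \sum_(k <- i :: s | P k) F k t) =
   (fun t => (if P i then F i t else 0) + \sum_(k <- s | P k) F k t).
  by apply/boolp.funext => t; rewrite big_cons; case: (P i); rewrite ?add0r.
apply: continuousD => //.
by case: (P i) => //; exact: cvg_cst.
Qed.

Lemma cont_pospart {T : topologicalType} (f : T -> R) (x : T) :
  {for x, continuous f} -> {for x, continuous (fun t => pospart (f t))}.
Proof.
move=> cf; rewrite /pospart.
exact: (@continuous_max R T f (fun=> 0) x cf (cvg_cst _)).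
Qed.


Lemma cont_hd (t x : R) : x != 0 -> {for x, continuous (fun r : R => pospart (t / r - 1))}.
Proof.
move=> x0; apply: cont_pospart.
apply: continuousB; last exact: cvg_cst.
apply: continuousM; first exact: cvg_cst.
exact: inv_continuous.
Qed.

Lemma ivt_Dc (th : 'I_I -> R) (sg : 'I_I -> 'I_J) n j (a b t : R) : 0 < a -> a <= b ->
  Dc th sg n j b <= t <= Dc th sg n j a -> exists2 r, a <= r <= b & Dc th sg n j r = t.
Proof.
move=> a0 ab /andP [h1 h2].
have cont : {within `[a, b], continuous (Dc th sg n j)}%classic.
  apply: continuous_in_subspaceT => x; rewrite inE /= in_itv /= => /andP [xa _].
  have x0 : x != 0 by rewrite gt_eqF // (lt_le_trans a0 xa).
  rewrite /Dc /Cs; apply: cont_sum => i.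
  apply: continuousM; first exact: cvg_cst.
  exact: cont_hd.
have [|r rab hr] := IVT ab cont (v := t).
  apply/andP; split.
    by apply: le_trans h1; rewrite ge_min lexx orbT.
  by apply: le_trans h2 _; rewrite le_max lexx.
by exists r => //; move: rab; rewrite in_itv.
Qed.

End Ana.


Section Exist.
Context {R : realType} {I J : nat}.

Lemma dm_ext (th : 'I_I -> R) (sg1 sg2 : 'I_I -> 'I_J) n1 n2 (p1 p2 : 'I_J -> R) :
  sg1 =1 sg2 -> n1 =1 n2 -> p1 =1 p2 -> dm th sg1 n1 p1 = dm th sg2 n2 p2.
Proof. by move=> h1 h2 h3; apply: eq_bigr => i _; rewrite h1 h2 h3. Qed.

Lemma rv_ext (th : 'I_I -> R) (sg1 sg2 : 'I_I -> 'I_J) n1 n2 (p1 p2 : 'I_J -> R) :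
  sg1 =1 sg2 -> n1 =1 n2 -> p1 =1 p2 -> rv th sg1 n1 p1 = rv th sg2 n2 p2.
Proof. by move=> h1 h2 h3; apply: eq_bigr => i _; rewrite h1 h2 h3. Qed.

Lemma fin_max (T : finType) (f : T -> R) (t0 : T) : exists t, forall u, f u <= f t.
Proof.
exists [arg max_(t > t0) f t]%O.
by case: arg_maxP => // t _ H u; apply: H.
Qed.

Definition clamp (e M x : R) := if x < e then e else if M < x then M else x.

Lemma clamp_eq (e M t x : R) : 0 < e -> e <= x -> t <= M -> e <= M ->
  pospart (t / clamp e M x - 1) = pospart (t / x - 1) /\
  pospart (t - clamp e M x) = pospart (t - x).
Proof.
move=> e0 ex tM eM; rewrite /clamp ltNge ex /=.
have x0 : 0 < x by exact: lt_le_trans ex.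
case: ifP => // xM.
have M0 : 0 < M by exact: lt_le_trans eM.
rewrite !pospart_0 //.
- by rewrite subr_le0 ltW // (le_lt_trans tM xM).
- by rewrite subr_le0.
- by rewrite subr_le0 ler_pdivrMr // mul1r ltW // (le_lt_trans tM xM).
- by rewrite subr_le0 ler_pdivrMr // mul1r.
Qed.

Lemma clamp_in (e M x : R) : e <= M -> e <= clamp e M x <= M.
Proof.
move=> eM; rewrite /clamp; case: ifP => xe; first by rewrite lexx eM.
case: ifP => Mx; first by rewrite eM lexx.
by rewrite leNgt xe /= leNgt Mx.
Qed.

End Exist.

Section Exist2.
Context {R : realType} {I J : nat} (S : R) (N : 'I_I -> nat) (th : 'I_I -> R).
Hypothesis S0 : 0 < S.
Hypothesis thpos : forall i, 0 < th i.

Lemma feas_lb (e : R) (sg : 'I_I -> 'I_J) n p : 0 < e -> (forall i, e <= th i / (S + 1)) ->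
  feas S N th sg n p -> forall i, (0 < n i)%N -> e <= p (sg i).
Proof.
move=> e0 he [p0 [_ dS]] i ni; rewrite leNgt; apply/negP => pe.
have pi0 := p0 (sg i).
have S1 : 0 < S + 1 by rewrite addr_gt0.
have h1 : S + 1 <= th i / e.
  by have := he i; rewrite !ler_pdivlMr // mulrC.
have h2 : th i / e < th i / p (sg i) by rewrite ltr_pM2l // ltf_pV2 ?posrE.
have h3 : S < th i / p (sg i) - 1.
  by rewrite ltrBrDr; apply: le_lt_trans h2.
have h4 : th i / p (sg i) - 1 <= (n i)%:R * pospart (th i / p (sg i) - 1).
  apply: le_trans (pospart_ge _) _; apply: ler_peMl; first exact: pospart_ge0.
  by rewrite ler1n.
have h5 : (n i)%:R * pospart (th i / p (sg i) - 1) <= dm th sg n p.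
  rewrite /dm (bigD1 i) //= lerDl; apply: sumr_ge0 => k _.
  by apply: mulr_ge0; [exact: ler0n | exact: pospart_ge0].
by move: dS; rewrite leNgt => /negP; apply; apply: lt_le_trans h3 (le_trans h4 h5).
Qed.

Lemma clamp_feas e M (sg : 'I_I -> 'I_J) n p : 0 < e -> (forall i, e <= th i / (S + 1)) ->
  (forall i, th i <= M) -> e <= M -> feas S N th sg n p ->
  dm th sg n (fun j => clamp e M (p j)) = dm th sg n p /\
  rv th sg n (fun j => clamp e M (p j)) = rv th sg n p.
Proof.
move=> e0 he hM eM F; have lb := feas_lb _ _ _ _ e0 he F.
split; apply: eq_bigr => i _; case: (posnP (n i)) => [->|ni]; rewrite ?mul0r //;
  have [h1 h2] := clamp_eq _ _ _ _ e0 (lb i ni) (hM i) eM; by rewrite ?h1 ?h2.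
Qed.


Definition fcv (sg : 'I_I -> 'I_J) (n : 'I_I -> nat) (v : 'rV[R]_J) : R :=
  rv th sg n (fun j => v ord0 j).
Definition dme (e : R) (sg : 'I_I -> 'I_J) (n : 'I_I -> nat) (v : 'rV[R]_J) : R :=
  dm th sg n (fun j => e + pospart (v ord0 j - e)).

Lemma cont_fcv sg n v : {for v, continuous (fcv sg n)}.
Proof.
rewrite /fcv /rv; apply: cont_sum => i.
apply: continuousM.
  exact: cst_continuous.
apply: cont_pospart; apply: continuousB; first exact: cst_continuous.
exact: coord_continuous.
Qed.

Lemma cont_dme e sg n v : 0 < e -> {for v, continuous (dme e sg n)}.
Proof.
move=> e0; rewrite /dme /dm; apply: cont_sum => i.
apply: continuousM; first exact: cst_continuous.
apply: cont_pospart; apply: continuousB; last exact: cst_continuous.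
apply: continuousM; first exact: cst_continuous.
apply: continuousV.
  rewrite gt_eqF //; apply: (lt_le_trans e0); rewrite lerDl; exact: pospart_ge0.
apply: continuousD; first exact: cst_continuous.
apply: cont_pospart; apply: continuousB; last exact: cst_continuous.
exact: coord_continuous.
Qed.


Lemma exist_opt (j0 : 'I_J) : exists sg n (p : 'I_J -> R), opt S N th sg n p.
Proof.
have hpos : forall i, true -> 0 < th i / (S + 1).
  by move=> i _; rewrite divr_gt0 // addr_gt0.
have [e e0 he'] := exists_small (fun _ => true) _ hpos.
have he : forall i, e <= th i / (S + 1) by move=> i; exact: he'.
pose M := Mtop th e.
have hM : forall i, th i <= M by move=> i; apply: th_le_Mtop => //; exact: ltW.
have eM : e <= M by apply: Mtop_ge.
have M0 : 0 < M by exact: lt_le_trans eM.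
pose K := (\sum_(i < I) N i).+1.
pose Ch := ({ffun 'I_I -> 'I_J} * {ffun 'I_I -> 'I_K})%type.
pose valid (c : Ch) := [forall i, (c.2 i <= N i)%N].
pose sgc (c : Ch) := fun i => c.1 i.
pose nc (c : Ch) := fun i => nat_of_ord (c.2 i).
pose box := [set v : 'rV[R]_J | forall j, `[e, M] (v ord0 j)]%classic.
pose Kc (c : Ch) := (box `&` [set v | dme e (sgc c) (nc c) v <= S])%classic.
have dmeE : forall c v, box v -> dme e (sgc c) (nc c) v = dm th (sgc c) (nc c) (fun j => v ord0 j).
  move=> c v bv; apply: dm_ext => // j.
  have := bv j; rewrite /= in_itv /= => /andP [h1 _].
  by rewrite pospart_id ?subr_ge0 // addrC subrK.
have Kcomp : forall c, compact (Kc c).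
  move=> c; apply: compact_closedI.
    rewrite /box; apply: (@rV_compact _ _ (fun _ => `[e, M]%classic)) => j.
    exact: segment_compact.
  have -> : [set v | dme e (sgc c) (nc c) v <= S]%classic =
            (dme e (sgc c) (nc c) @^-1` [set x | x <= S])%classic by [].
  apply: preimage_closed; last exact: closed_le.
  by move=> v _; apply: cont_dme.
have vM : forall c, Kc c (\row_j M).
  move=> c; split.
    by move=> j; rewrite /= mxE in_itv /= eM lexx.
  rewrite /= dmeE; last by move=> j; rewrite /= mxE in_itv /= eM lexx.
  rewrite /dm big1 ?ltW // => i _.
  rewrite mxE pospart_0 ?mulr0 // subr_le0 ler_pdivrMr // mul1r; exact: hM.
have best : forall c, exists v, valid c ->
    Kc c v /\ forall w, Kc c w -> fcv (sgc c) (nc c) w <= fcv (sgc c) (nc c) v.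
  move=> c.
  have ne : (Kc c !=set0)%classic by exists (\row_j M); exact: vM.
  have ct : {within Kc c, continuous (fcv (sgc c) (nc c))}%classic.
    by apply: continuous_subspaceT => v; apply: cont_fcv.
  have [v vK vmax] := @EVT_max_rV R J (fcv (sgc c) (nc c)) (Kc c) ne (Kcomp c) ct.
  exists v => _; split; first by move: vK; rewrite inE.
  by move=> w wK; apply: vmax; rewrite inE.
have [vb hvb] := boolp.choice best.
pose val (c : Ch) := if valid c then fcv (sgc c) (nc c) (vb c) else -1.
pose c0 : Ch := ([ffun _ => j0], [ffun _ => ord0]).
have [cs hcs] := fin_max _ val c0.
have fcv_ge0 : forall c v, 0 <= fcv (sgc c) (nc c) v.
  move=> c v; apply: sumr_ge0 => i _.
  by apply: mulr_ge0; [exact: ler0n|exact: pospart_ge0].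
have vc0 : valid c0 by apply/forallP => i; rewrite /c0 /= ffunE.
have vcs : valid cs.
  have := hcs c0; rewrite /val vc0; case: (valid cs) => // h.
  exfalso; move: h; apply/negP; rewrite -ltNge.
  apply: lt_le_trans (fcv_ge0 c0 (vb c0)); by rewrite ltrN10.
have [Ks Kmax] := hvb cs vcs.
exists (sgc cs), (nc cs), (fun j => vb cs ord0 j).
have bs : box (vb cs) by case: Ks.
split.
  split; first by move=> j; have := bs j; rewrite /= in_itv /= => /andP [h _]; exact: lt_le_trans h.
  split; first by move=> i; move/forallP: vcs => /(_ i).
  by case: Ks => _ /=; rewrite dmeE.
move=> sg' n' p' F'.
pose c : Ch := ([ffun i => sg' i], [ffun i => inord (n' i)]).
have [_ [nN' _]] := F'.
have ncE : nc c =1 n'.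
  move=> i; rewrite /nc /c /= ffunE inordK // ltnS; apply: leq_trans (nN' i) _.
  by rewrite (bigD1 i) //= leq_addr.
have sgcE : sgc c =1 sg' by move=> i; rewrite /sgc /c /= ffunE.
have vc : valid c by apply/forallP => i; have := ncE i; rewrite /nc => ->; exact: nN'.
pose w := \row_j clamp e M (p' j).
have [cd cr] := clamp_feas _ _ _ _ _ e0 he hM eM F'.
have bw : box w by move=> j; rewrite /= mxE in_itv /=; exact: clamp_in.
have wK : Kc c w.
  split => //; rewrite /= dmeE //.
  rewrite (dm_ext _ _ sg' _ n' _ (fun j => clamp e M (p' j))) ?cd ?(le_trans (proj2 (proj2 F'))) //.
  by move=> j; rewrite mxE.
have h1 := (hvb c vc).2 w wK.
have h2 := hcs c; rewrite /val vc vcs in h2.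
have e1 : fcv (sgc c) (nc c) w = rv th sg' n' p'.
  rewrite -cr /fcv; apply: rv_ext => // j; by rewrite mxE.
rewrite -e1; apply: le_trans h1 h2.
Qed.

End Exist2.


Section Final.
Context {R : realType} {I J : nat} (S : R) (N : 'I_I -> nat) (th : 'I_I -> R).
Hypothesis thpos : forall i, 0 < th i.

Lemma normalize (sg : 'I_I -> 'I_J) n p : opt S N th sg n p ->
  exists n1, opt S N th sg n1 p /\ nz th sg n1 p.
Proof.
move=> [[p0 [nN dS]] op].
pose n1 := fun i => if p (sg i) < th i then n i else 0%N.
have tE : forall (F : R -> R), (forall x, x <= 0 -> F x = 0) ->
   forall i, (n1 i)%:R * F (th i / p (sg i) - 1) = (n i)%:R * F (th i / p (sg i) - 1).
  move=> F HF k0; rewrite /n1; case: ifP => // /negbT; rewrite -leNgt => h.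
  by rewrite HF ?mulr0 // subr_le0 ler_pdivrMr // mul1r.
have tE0 := tE pospart (fun x hx => pospart_0 x hx).
have dE : dm th sg n1 p = dm th sg n p.
  by apply: eq_bigr => i _; exact: tE0.
have rE : rv th sg n1 p = rv th sg n p.
  apply: eq_bigr => i _; rewrite -(pospart_mul (th i) (p (sg i))) //.
  by rewrite mulrCA [in RHS]mulrCA tE0.
exists n1; split; last by move=> i; rewrite /n1; case: ifP.
split; last by move=> sg' n' p' F; rewrite rE; exact: op.
split => //; split; last by rewrite dE.
by move=> i; rewrite /n1; case: ifP => // _; exact: nN.
Qed.

Lemma merge_lem (sg : 'I_I -> 'I_J) n p : opt S N th sg n p -> nz th sg n p ->
  exists sg1, [/\ opt S N th sg1 n p, nz th sg1 n p &
     forall i k, p (sg1 i) = p (sg1 k) -> sg1 i = sg1 k].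
Proof.
move=> [[p0 [nN dS]] op] z.
pose canon (j : 'I_J) := odflt j [pick k | p k == p j].
have cE : forall j, p (canon j) = p j.
  by move=> j; rewrite /canon; case: pickP => //= k /eqP.
have cC : forall j j', p j = p j' -> canon j = canon j'.
  move=> j j' e; rewrite /canon e; case: pickP => //= /(_ j').
  by rewrite eqxx.
pose sg1 := fun i => canon (sg i).
have dE : dm th sg1 n p = dm th sg n p by apply: eq_bigr => i _; rewrite /sg1 cE.
have rE : rv th sg1 n p = rv th sg n p by apply: eq_bigr => i _; rewrite /sg1 cE.
exists sg1; split.
- split; last by move=> sg' n' p' F; rewrite rE; exact: op.
  by split => //; split => //; rewrite dE.
- by move=> i ni; rewrite /sg1 cE; exact: z.
- by move=> i k; rewrite /sg1 !cE => /cC.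
Qed.

End Final.


Section Conv.
Context {R : realType} {I J : nat}.

Lemma pick_sg (a : 'I_I -> 'I_J -> nat) (j0 : 'I_J) i :
  (forall j, (a i j == 0)%N || (a i j == 1)%N) -> (\sum_(j < J) a i j)%N = 1%N ->
  let k := odflt j0 [pick j | a i j == 1%N] in
  a i k = 1%N /\ forall j, j != k -> a i j = 0%N.
Proof.
move=> h01 hs k.
have hk : a i k = 1%N.
  rewrite /k; case: pickP => [j /eqP //|H]; exfalso.
  move: hs; rewrite big1 // => j _.
  by have := h01 j; rewrite H orbF => /eqP.
split => // j jk; move: hs; rewrite (bigD1 k) //= hk (bigD1 j) ?jk //=.
by move=> /eqP; rewrite -[X in _ == X]addn0 eqn_add2l addn_eq0 => /andP [/eqP -> _].
Qed.

Lemma gp_one (p : 'I_J -> R) (a : 'I_I -> 'I_J -> nat) i k :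
  a i k = 1%N -> (forall j, j != k -> a i j = 0%N) -> group_price p a i = p k.
Proof.
move=> hk h0; rewrite /group_price (bigD1 k) //= hk mul1r big1 ?addr0 // => j /h0 ->.
by rewrite mul0r.
Qed.

Lemma revenue_rv (th : 'I_I -> R) (p : 'I_J -> R) a n (sg : 'I_I -> 'I_J) :
  (forall j, 0 < p j) -> (forall i, group_price p a i = p (sg i)) ->
  revenue th p a n = rv th sg n p /\ \sum_(i < I) (n i)%:R * demand th p a i = dm th sg n p.
Proof.
move=> p0 hg; split; apply: eq_bigr => i _; rewrite /demand hg //.
by rewrite -mulrA pospart_mul.
Qed.

End Conv.

Theorem theorem4 (R : realType) (S : R) (I J : nat)
  (N : 'I_I -> nat) (theta : 'I_I -> R) :
  0 < S -> (1 <= I)%N -> (1 <= J)%N -> (J <= I)%N ->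
  (forall i, (0 < N i)%N) ->
  (forall i, 0 < theta i) ->
  (forall i k : 'I_I, (i < k)%N -> theta k < theta i) ->
  exists (p : 'I_J -> R) (a : 'I_I -> 'I_J -> nat) (n : 'I_I -> nat),
    feasible S N theta p a n
    /\ (forall (p' : 'I_J -> R) (a' : 'I_I -> 'I_J -> nat) (n' : 'I_I -> nat),
          feasible S N theta p' a' n' ->
          revenue theta p' a' n' <= revenue theta p a n)
    /\ (forall j : 'I_J, consecutive (in_cluster theta p a n j)).
Proof.
move=> S0 I1 J1 JI Npos thpos thdec.
pose j0 : 'I_J := Ordinal J1.
have [sg0 [n0 [p0 ho0]]] := exist_opt S N theta S0 thpos j0.
have [n1 [ho1 hz1]] := normalize S N theta sg0 n0 p0 ho0.
have [sg1 [ho hz mg]] := merge_lem S N theta sg0 n1 p0 ho1 hz1.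
have ivt := @ivt_Dc R I J theta.
have cm := consec_main S N theta thpos ivt sg1 n1 p0 ho hz mg Npos thdec.
have [[pp0 [nN dS]] op] := ho.
pose a := fun i j => nat_of_bool (sg1 i == j).
have ha1 : forall i, a i (sg1 i) = 1%N by move=> i; rewrite /a eqxx.
have ha0 : forall i j, j != sg1 i -> a i j = 0%N by move=> i j h; rewrite /a eq_sym (negbTE h).
have gpa : forall i, group_price p0 a i = p0 (sg1 i).
  by move=> i; apply: gp_one; [exact: ha1| move=> j; exact: ha0].
have [revE demE] := revenue_rv theta p0 a n1 sg1 pp0 gpa.
exists p0, a, n1; split.
  split => //; split; first by move=> i j; rewrite /a; case: (sg1 i == j).
  split.
    move=> i; rewrite (bigD1 (sg1 i)) //= ha1 big1 // => j; exact: ha0.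
  by split => //; rewrite demE.
split.
  move=> p' a' n' [p'0 [h01 [hs [nN' dS']]]].
  pose sg' := fun i => odflt j0 [pick j | a' i j == 1%N].
  have gp' : forall i, group_price p' a' i = p' (sg' i).
    by move=> i; have [h1 h2] := pick_sg a' j0 i (h01 i) (hs i); exact: gp_one.
  have [rE' dE'] := revenue_rv theta p' a' n' sg' p'0 gp'.
  rewrite rE' revE; apply: op; split => //; split => //; by rewrite -dE'.
move=> j l k m [hl al] [hm am] lk km.
have nl : (0 < n1 l)%N.
  by move: hl; case: (posnP (n1 l)) => // ->; rewrite mul0r ltxx.
have nm : (0 < n1 m)%N.
  by move: hm; case: (posnP (n1 m)) => // ->; rewrite mul0r ltxx.
have sl : sg1 l = j by move: al; rewrite /a; case: eqP.
have sm : sg1 m = j by move: am; rewrite /a; case: eqP.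
have [nk sk] := cm j l k m nl sl nm sm lk km.
split; last by rewrite /a sk eqxx.
rewrite /demand gpa mulr_gt0 ?ltr0n // hd_pos //; exact: hz.
Qed.
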